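(* For $i=1,2$ let $\pi^{(i)}$, $\sigma^{(i)}$, $\pi'^{(i)}$ be formal Poisson deformations of $\pi_0$, $\sigma_0$, $\pi_0'$ respectively, and let $\Phi^{(i)}:(\mathcal{A}[[\lambda]],\pi^{(i)})\to(\mathcal{B}[[\lambda]],\sigma^{(i)})$ and $\Phi'^{(i)}:(\mathcal{A}'[[\lambda]],\pi'^{(i)})\to(\mathcal{B}[[\lambda]],\sigma^{(i)})$ be $\mathbb{K}[[\lambda]]$-linear Poisson morphisms with zeroth-order terms $\phi_0$ and $\phi_0'$ respectively, whose images Poisson commute with respect to $\sigma^{(i)}$. Suppose there are $\mathbb{K}[[\lambda]]$-linear Poisson isomorphisms $\psi:(\mathcal{A}[[\lambda]],\pi^{(1)})\to(\mathcal{A}[[\lambda]],\pi^{(2)})$ and $\Psi:(\mathcal{B}[[\lambda]],\sigma^{(1)})\to(\mathcal{B}[[\lambda]],\sigma^{(2)})$ with $\Phi^{(2)}\circ\psi=\Psi\circ\Phi^{(1)}$. Then there is a Poisson isomorphism $\psi':(\mathcal{A}'[[\lambda]],\pi'^{(1)})\to(\mathcal{A}'[[\lambda]],\pi'^{(2)})$ such that $\Phi'^{(2)}\circ\psi'=\Psi\circ\Phi'^{(1)}$.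
   Context: $\mathbb{K}$ is a field of characteristic zero. $\mathcal{A},\mathcal{B}$ are commutative $\mathbb{K}$-algebras with Poisson brackets $\pi_0$, $\sigma_0$, and $\phi_0:\mathcal{A}\to\mathcal{B}$ is a Poisson morphism. $\mathcal{A}'$ is the Poisson commutant $\{b\in\mathcal{B}:\sigma_0(b,\phi_0(a))=0\ \forall a\}$ with the induced bracket $\pi_0'$, and $\phi_0':\mathcal{A}'\to\mathcal{B}$ is the inclusion. A formal Poisson deformation of a Poisson bracket on an algebra $\mathcal{R}$ is a $\mathbb{K}[[\lambda]]$-bilinear Poisson bracket on $\mathcal{R}[[\lambda]]$ (with $\lambda$-linearly extended product) whose zeroth-order term is the given bracket. Poisson morphisms preserve both products and brackets. *)

(* Defs.v *)
From HB Require Import structures.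
From mathcomp Require Import all_boot all_order all_algebra.
Set Implicit Arguments.
Unset Strict Implicit.
Unset Printing Implicit Defensive.
Import GRing.Theory.
Local Open Scope ring_scope.

Section Classical.
Variables (K : fieldType).

Definition is_poisson (X : comAlgType K) (p : X -> X -> X) : Prop :=
  [/\ (forall (c : K) x y z, p (c *: x + y) z = c *: p x z + p y z),
      (forall (c : K) x y z, p x (c *: y + z) = c *: p x y + p x z),
      (forall x y, p x y = - p y x),
      (forall x y z, p x (y * z) = p x y * z + y * p x z) &
      (forall x y z, p x (p y z) + p y (p z x) + p z (p x y) = 0)].

Definition is_poisson_morph (X Y : comAlgType K)
    (p : X -> X -> X) (q : Y -> Y -> Y) (f : X -> Y) : Prop :=
  [/\ (forall (c : K) x y, f (c *: x + y) = c *: f x + f y),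
      (forall x y, f (x * y) = f x * f y) &
      (forall x y, f (p x y) = q (f x) (f y))].

Definition poisson_commutant (X Y : comAlgType K)
    (q : Y -> Y -> Y) (f : X -> Y) : Y -> Prop :=
  fun b => forall a, q b (f a) = 0.
End Classical.

(* A series is its coefficient sequence; [a n] is the coefficient of lambda^n. *)
Definition ps (X : Type) := nat -> X.

Section Series.
Variables (K : fieldType).

Definition psadd (X : comAlgType K) (a b : ps X) : ps X := fun n => a n + b n.

Definition psmul (X : comAlgType K) (a b : ps X) : ps X :=
  fun n => \sum_(i < n.+1) a i * b (n - i)%N.

Definition psscale (X : comAlgType K) (c : ps K) (a : ps X) : ps X :=
  fun n => \sum_(i < n.+1) c i *: a (n - i)%N.

Definition in_ps (X : Type) (D : X -> Prop) (a : ps X) : Prop := forall n, D (a n).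

Definition allX (X : Type) : X -> Prop := fun _ => True.

(* P is a K[[lambda]]-bilinear Poisson bracket on D[[lambda]] (D a subalgebra
   of X; the bracket is only relevant on series with coefficients in D) *)
Definition ps_poisson_on (X : comAlgType K) (D : X -> Prop)
    (P : ps X -> ps X -> ps X) : Prop :=
  (forall a b, in_ps D a -> in_ps D b -> in_ps D (P a b)) /\
  [/\ (forall (c : ps K) a a' b, in_ps D a -> in_ps D a' -> in_ps D b ->
          P (psadd (psscale c a) a') b = psadd (psscale c (P a b)) (P a' b)),
      (forall (c : ps K) a b b', in_ps D a -> in_ps D b -> in_ps D b' ->
          P a (psadd (psscale c b) b') = psadd (psscale c (P a b)) (P a b')),
      (forall a b, in_ps D a -> in_ps D b -> P a b = fun n => - P b a n),
      (forall a b c, in_ps D a -> in_ps D b -> in_ps D c ->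
          P a (psmul b c) = psadd (psmul (P a b) c) (psmul b (P a c))) &
      (forall a b c, in_ps D a -> in_ps D b -> in_ps D c ->
          psadd (psadd (P a (P b c)) (P b (P c a))) (P c (P a b)) = fun _ => 0)].

Definition ps_deformation_on (X : comAlgType K) (D : X -> Prop)
    (p0 : X -> X -> X) (P : ps X -> ps X -> ps X) : Prop :=
  ps_poisson_on D P /\
  (forall a b, in_ps D a -> in_ps D b -> P a b 0%N = p0 (a 0%N) (b 0%N)).

Definition ps_poisson_morph_on (X Y : comAlgType K) (D : X -> Prop) (E : Y -> Prop)
    (P : ps X -> ps X -> ps X) (Q : ps Y -> ps Y -> ps Y) (f : ps X -> ps Y) : Prop :=
  [/\ (forall a, in_ps D a -> in_ps E (f a)),
      (forall (c : ps K) a b, in_ps D a -> in_ps D b ->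
          f (psadd (psscale c a) b) = psadd (psscale c (f a)) (f b)),
      (forall a b, in_ps D a -> in_ps D b -> f (psmul a b) = psmul (f a) (f b)) &
      (forall a b, in_ps D a -> in_ps D b -> f (P a b) = Q (f a) (f b))].

Definition ps_poisson_iso_on (X Y : comAlgType K) (D : X -> Prop) (E : Y -> Prop)
    (P : ps X -> ps X -> ps X) (Q : ps Y -> ps Y -> ps Y) (f : ps X -> ps Y) : Prop :=
  [/\ ps_poisson_morph_on D E P Q f,
      (forall a b, in_ps D a -> in_ps D b -> f a = f b -> a = b) &
      (forall b, in_ps E b -> exists2 a, in_ps D a & f a = b)].
End Series.

(* Main.v *)
Require Import Defs.
From mathcomp Require Import all_boot all_order all_algebra.
From Stdlib Require Import FunctionalExtensionality ClassicalEpsilon.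
Set Implicit Arguments. Unset Strict Implicit. Unset Printing Implicit Defensive.
Import GRing.Theory.
Local Open Scope ring_scope.

Definition zro (X : Type) (z : X) : ps X := fun _ => z.
Definition lam (K : fieldType) : ps K := fun n => if n == 1%N then 1 else 0.
Definition cst (X : Type) (z x : X) : ps X := fun n => if n == 0%N then x else z.
Definition shd (X : Type) (x : ps X) : ps X := fun n => x n.+1.

Lemma psscale_lam0 (K : fieldType) (X : comAlgType K) (y : ps X) :
  psscale (lam K) y 0%N = 0.
Proof. by rewrite /psscale big_ord1 /lam /= scale0r. Qed.

Lemma psscale_lamS (K : fieldType) (X : comAlgType K) (y : ps X) n :
  psscale (lam K) y n.+1 = y n.
Proof.
rewrite /psscale big_ord_recl big_ord_recl big1 => [|i _].
  by rewrite /lam /= scale0r scale1r add0r addr0 subSS subn0.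
by rewrite /lam /= /bump /= scale0r.
Qed.

Lemma psscale_cst (K : fieldType) (X : comAlgType K) (k : K) (y : ps X) n :
  psscale (cst 0 k) y n = k *: y n.
Proof.
rewrite /psscale big_ord_recl big1 => [|i _].
  by rewrite /cst /= subn0 addr0.
by rewrite /cst /= /bump /= scale0r.
Qed.

Lemma neg_cancel (K : fieldType) (X : comAlgType K) (z : ps X) :
  psadd (psscale (cst 0 (-1)) z) z = zro 0.
Proof.
apply: functional_extensionality => n.
by rewrite /psadd psscale_cst scaleN1r addNr.
Qed.

Lemma lin_zero (K : fieldType) (X Y : comAlgType K) (D : X -> Prop)
  (f : ps X -> ps Y) z :
  (forall (c : ps K) a b, in_ps D a -> in_ps D b ->
          f (psadd (psscale c a) b) = psadd (psscale c (f a)) (f b)) ->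
  in_ps D z -> f (zro 0) = zro 0.
Proof.
move=> Hl Hz; by rewrite -(neg_cancel z) Hl // neg_cancel.
Qed.

Lemma lam_shift (K : fieldType) (X : comAlgType K) (d : ps X) :
  d 0%N = 0 -> d = psadd (psscale (lam K) (shd d)) (zro 0).
Proof.
move=> H0; apply: functional_extensionality => -[|n];
  by rewrite /psadd ?psscale_lam0 ?psscale_lamS /zro addr0.
Qed.

Lemma lam_inj (K : fieldType) (X : comAlgType K) (s : ps X) :
  psadd (psscale (lam K) s) (zro 0) = zro 0 -> s = zro 0.
Proof.
move=> H; apply: functional_extensionality => n.
have := congr1 (fun f => f n.+1) H; by rewrite /psadd psscale_lamS /zro addr0.
Qed.

Lemma Dc0 (K : fieldType) (A B : comAlgType K) (s : B -> B -> B) (f : A -> B) :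
  is_poisson s -> poisson_commutant s f 0.
Proof.
case=> Hl1 _ _ _ _ a.
have H := Hl1 (-1) 0 0 (f a).
by rewrite scaler0 addr0 scaleN1r addNr in H.
Qed.

Lemma DcZ (K : fieldType) (A B : comAlgType K) (s : B -> B -> B) (f : A -> B) c x y :
  is_poisson s -> poisson_commutant s f x -> poisson_commutant s f y ->
  poisson_commutant s f (c *: x + y).
Proof.
case=> Hl1 _ _ _ _ Hx Hy a.
by rewrite Hl1 Hx Hy scaler0 addr0.
Qed.

Lemma DcD (K : fieldType) (A B : comAlgType K) (s : B -> B -> B) (f : A -> B) x y :
  is_poisson s -> poisson_commutant s f x -> poisson_commutant s f y ->
  poisson_commutant s f (x + y).
Proof. by move=> Hs Hx Hy; rewrite -(scale1r x); apply: DcZ. Qed.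

Lemma DcM (K : fieldType) (A B : comAlgType K) (s : B -> B -> B) (f : A -> B) x y :
  is_poisson s -> poisson_commutant s f x -> poisson_commutant s f y ->
  poisson_commutant s f (x * y).
Proof.
case=> _ _ Has Hlb _ Hx Hy a.
by rewrite Has Hlb (Has _ x) (Has _ y) Hx Hy !oppr0 mul0r mulr0 addr0 oppr0.
Qed.

Lemma DcSum (K : fieldType) (A B : comAlgType K) (s : B -> B -> B) (f : A -> B)
  n (F : 'I_n -> B) :
  is_poisson s -> (forall i, poisson_commutant s f (F i)) ->
  poisson_commutant s f (\sum_(i < n) F i).
Proof.
move=> Hs HF; apply: (big_ind (poisson_commutant s f)).
- exact: Dc0.
- by move=> x y; apply: DcD.
- by move=> i _; apply: HF.
Qed.

Lemma Dc_lin (K : fieldType) (A B : comAlgType K) (s : B -> B -> B) (f : A -> B)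
  (c : ps K) a b :
  is_poisson s -> in_ps (poisson_commutant s f) a -> in_ps (poisson_commutant s f) b ->
  in_ps (poisson_commutant s f) (psadd (psscale c a) b).
Proof.
move=> Hs Ha Hb n; apply: DcD => //; rewrite /psscale; apply: DcSum => // i.
by rewrite -[_ *: _]addr0; apply: DcZ => //; apply: Dc0.
Qed.

Lemma Dc_mul (K : fieldType) (A B : comAlgType K) (s : B -> B -> B) (f : A -> B)
  a b :
  is_poisson s -> in_ps (poisson_commutant s f) a -> in_ps (poisson_commutant s f) b ->
  in_ps (poisson_commutant s f) (psmul a b).
Proof.
move=> Hs Ha Hb n; rewrite /psmul; apply: DcSum => // i; exact: DcM.
Qed.

Lemma Dc_zro (K : fieldType) (A B : comAlgType K) (s : B -> B -> B) (f : A -> B) :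
  is_poisson s -> in_ps (poisson_commutant s f) (zro 0).
Proof. by move=> Hs n; apply: Dc0. Qed.

Lemma Dc_cst (K : fieldType) (A B : comAlgType K) (s : B -> B -> B) (f : A -> B) x :
  is_poisson s -> poisson_commutant s f x -> in_ps (poisson_commutant s f) (cst 0 x).
Proof. by move=> Hs Hx [|n] //=; apply: Dc0. Qed.

Lemma inj_core (K : fieldType) (A B : comAlgType K) (s : B -> B -> B) (f : A -> B)
  (Phi' : ps B -> ps B) :
  is_poisson s ->
  (forall (c : ps K) a b, in_ps (poisson_commutant s f) a -> in_ps (poisson_commutant s f) b ->
     Phi' (psadd (psscale c a) b) = psadd (psscale c (Phi' a)) (Phi' b)) ->
  (forall b, in_ps (poisson_commutant s f) b -> Phi' b 0%N = b 0%N) ->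
  forall a b, in_ps (poisson_commutant s f) a -> in_ps (poisson_commutant s f) b ->
     Phi' a = Phi' b -> a = b.
Proof.
move=> Hs Hlin H0.
have Z : forall n d, in_ps (poisson_commutant s f) d -> Phi' d = zro 0 -> d n = 0.
  elim=> [|n IH] d Hd HP; first by rewrite -H0 // HP.
  have Hd0 : d 0%N = 0 by rewrite -H0 // HP.
  have Hsh : in_ps (poisson_commutant s f) (shd d) by move=> k; exact: Hd.
  have : Phi' (psadd (psscale (lam K) (shd d)) (zro 0)) = zro 0 by rewrite -(lam_shift Hd0).
  rewrite Hlin //; last exact: Dc_zro.
  rewrite (lin_zero Hlin (Dc_zro f Hs)) => /lam_inj HP'.
  exact: (IH _ Hsh HP').
move=> a b Ha Hb Hab; apply: functional_extensionality => n.
have Hd := Dc_lin (cst 0 (-1)) Hs Ha Hb.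
have := Z n _ Hd; rewrite Hlin // Hab neg_cancel => /(_ erefl).
rewrite /psadd psscale_cst scaleN1r => /eqP; rewrite addrC subr_eq0 => /eqP -> //.
Qed.

Lemma comm_core (K : fieldType) (A B : comAlgType K) (s : B -> B -> B) (f : A -> B)
  (sig : ps B -> ps B -> ps B) (Phi : ps A -> ps B) (Phi' : ps B -> ps B) :
  is_poisson s ->
  (forall (c : ps K) a b b', sig a (psadd (psscale c b) b') = psadd (psscale c (sig a b)) (sig a b')) ->
  (forall a b, sig a b 0%N = s (a 0%N) (b 0%N)) ->
  (forall a, Phi a 0%N = f (a 0%N)) ->
  (forall (c : ps K) a b, in_ps (poisson_commutant s f) a -> in_ps (poisson_commutant s f) b ->
     Phi' (psadd (psscale c a) b) = psadd (psscale c (Phi' a)) (Phi' b)) ->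
  (forall b, in_ps (poisson_commutant s f) b -> Phi' b 0%N = b 0%N) ->
  (forall a b, in_ps (poisson_commutant s f) b -> sig (Phi a) (Phi' b) = fun _ => 0) ->
  forall c, (forall a, sig (Phi a) c = zro 0) ->
  exists2 b, in_ps (poisson_commutant s f) b & Phi' b = c.
Proof.
move=> Hs Hsl Hs0 HP0 Hlin H0 Hcomm.
set D := poisson_commutant s f.
pose comm c := forall a, sig (Phi a) c = zro 0.
have sigz : forall a, sig a (zro 0) = zro 0.
  by move=> a; apply: (@lin_zero _ _ _ (@allX B) (sig a) (zro 0)).
have step : forall c, comm c -> D (c 0%N) /\
   comm (shd (psadd (psscale (cst 0 (-1)) (Phi' (cst 0 (c 0%N)))) c)).
  move=> c Hc.
  have Dc : D (c 0%N).
    move=> x; case: (Hs) => _ _ Has _ _.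
    have H := congr1 (fun g => g 0%N) (Hc (cst 0 x)).
    rewrite /= Hs0 HP0 /= in H.
    by rewrite Has H oppr0.
  split=> // a.
  set d := psadd _ c.
  have Hd0 : d 0%N = 0.
    by rewrite /d /psadd psscale_cst H0 /= ?scaleN1r ?addNr //; apply: Dc_cst.
  have Hcd : sig (Phi a) d = zro 0.
    rewrite /d Hsl Hc Hcomm; last exact: Dc_cst.
    apply: functional_extensionality => n.
    by rewrite /psadd psscale_cst /zro scaler0 addr0.
  have : sig (Phi a) (psadd (psscale (lam K) (shd d)) (zro 0)) = zro 0
    by rewrite -(lam_shift Hd0).
  rewrite Hsl sigz.
  exact: lam_inj.
move=> c Hc.
pose r m := iter m (fun c => shd (psadd (psscale (cst 0 (-1)) (Phi' (cst 0 (c 0%N)))) c)) c.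
have Hr : forall m, comm (r m) by elim=> [|m IH] //=; case: (step _ IH).
have HDr : forall m, D (r m 0%N) by move=> m; case: (step _ (Hr m)).
pose b m := r m 0%N.
have Hb : in_ps D b by move=> m; exact: HDr.
have Htail : forall m, in_ps D (fun k => b (k + m)%N) by move=> m k; exact: Hb.
have key : forall n m, Phi' (fun k => b (k + m)%N) n = r m n.
  elim=> [|n IH] m; first by rewrite H0.
  have E : (fun k => b (k + m)%N) =
     psadd (psscale (lam K) (fun k => b (k + m.+1)%N)) (cst 0 (b m)).
    apply: functional_extensionality => -[|k]; rewrite /psadd.
      by rewrite psscale_lam0 add0r.
    by rewrite psscale_lamS /= addr0 addSnnS.
  rewrite E Hlin //; last by apply: Dc_cst => //; exact: Hb.
  rewrite /psadd psscale_lamS IH /= /shd /psadd psscale_cst scaleN1r.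
  by rewrite /b addrAC addNr add0r.
exists b => //; apply: functional_extensionality => n.
have := key n 0%N.
have -> : (fun k => b (k + 0)%N) = b by apply: functional_extensionality => k; rewrite addn0.
done.
Qed.

Theorem proposition3p13 (K : fieldType) (charK : [pchar K] =i pred0)
  (A B : comAlgType K) (pi0 : A -> A -> A) (sigma0 : B -> B -> B) (phi0 : A -> B)
  (Hpi0 : is_poisson pi0) (Hsigma0 : is_poisson sigma0)
  (Hphi0 : is_poisson_morph pi0 sigma0 phi0)
  (pi1 pi2 : ps A -> ps A -> ps A) (sig1 sig2 : ps B -> ps B -> ps B)
  (pi'1 pi'2 : ps B -> ps B -> ps B)
  (Hpi1 : ps_deformation_on (@allX A) pi0 pi1)
  (Hpi2 : ps_deformation_on (@allX A) pi0 pi2)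
  (Hsig1 : ps_deformation_on (@allX B) sigma0 sig1)
  (Hsig2 : ps_deformation_on (@allX B) sigma0 sig2)
  (Hpi'1 : ps_deformation_on (poisson_commutant sigma0 phi0) sigma0 pi'1)
  (Hpi'2 : ps_deformation_on (poisson_commutant sigma0 phi0) sigma0 pi'2)
  (Phi1 Phi2 : ps A -> ps B) (Phi'1 Phi'2 : ps B -> ps B)
  (HPhi1 : ps_poisson_morph_on (@allX A) (@allX B) pi1 sig1 Phi1)
  (HPhi2 : ps_poisson_morph_on (@allX A) (@allX B) pi2 sig2 Phi2)
  (HPhi'1 : ps_poisson_morph_on (poisson_commutant sigma0 phi0) (@allX B) pi'1 sig1 Phi'1)
  (HPhi'2 : ps_poisson_morph_on (poisson_commutant sigma0 phi0) (@allX B) pi'2 sig2 Phi'2)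
  (HPhi1_0 : forall a : ps A, Phi1 a 0%N = phi0 (a 0%N))
  (HPhi2_0 : forall a : ps A, Phi2 a 0%N = phi0 (a 0%N))
  (HPhi'1_0 : forall b : ps B, in_ps (poisson_commutant sigma0 phi0) b -> Phi'1 b 0%N = b 0%N)
  (HPhi'2_0 : forall b : ps B, in_ps (poisson_commutant sigma0 phi0) b -> Phi'2 b 0%N = b 0%N)
  (Hcomm1 : forall (a : ps A) (b : ps B), in_ps (poisson_commutant sigma0 phi0) b ->
      sig1 (Phi1 a) (Phi'1 b) = fun _ => 0)
  (Hcomm2 : forall (a : ps A) (b : ps B), in_ps (poisson_commutant sigma0 phi0) b ->
      sig2 (Phi2 a) (Phi'2 b) = fun _ => 0)
  (psi : ps A -> ps A) (Psi : ps B -> ps B)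
  (Hpsi : ps_poisson_iso_on (@allX A) (@allX A) pi1 pi2 psi)
  (HPsi : ps_poisson_iso_on (@allX B) (@allX B) sig1 sig2 Psi)
  (Hintertwine : forall a : ps A, Phi2 (psi a) = Psi (Phi1 a)) :
  exists psi' : ps B -> ps B,
    ps_poisson_iso_on (poisson_commutant sigma0 phi0) (poisson_commutant sigma0 phi0)
      pi'1 pi'2 psi' /\
    forall b : ps B, in_ps (poisson_commutant sigma0 phi0) b ->
      Phi'2 (psi' b) = Psi (Phi'1 b).
Proof.
set D := poisson_commutant sigma0 phi0.
have tA : forall a : ps A, in_ps (@allX A) a by [].
have tB : forall a : ps B, in_ps (@allX B) a by [].
case: Hsig1 => [[_ [_ Hsl1 _ _ _]] Hs01].
case: Hsig2 => [[_ [_ Hsl2 _ _ _]] Hs02].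
case: Hpi'1 => [[Hpi'1D _] _].
case: Hpi'2 => [[Hpi'2D _] _].
case: HPhi'1 => [_ HP1l HP1m HP1b].
case: HPhi'2 => [_ HP2l HP2m HP2b].
case: Hpsi => [_ _ Hpsis].
case: HPsi => [[_ HPsil HPsim HPsib] HPsii HPsis].
have Psi0 : Psi (zro 0) = zro 0 by apply: (lin_zero HPsil (tB (zro 0))).
have inj1 := inj_core Hsigma0 HP1l HPhi'1_0.
have inj2 := inj_core Hsigma0 HP2l HPhi'2_0.
have cc1 := @comm_core K A B sigma0 phi0 sig1 Phi1 Phi'1 Hsigma0
   (fun c a b b' => Hsl1 c a b b' (tB _) (tB _) (tB _)) (fun a b => Hs01 a b (tB _) (tB _)) HPhi1_0 HP1l HPhi'1_0 Hcomm1.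
have cc2 := @comm_core K A B sigma0 phi0 sig2 Phi2 Phi'2 Hsigma0
   (fun c a b b' => Hsl2 c a b b' (tB _) (tB _) (tB _)) (fun a b => Hs02 a b (tB _) (tB _)) HPhi2_0 HP2l HPhi'2_0 Hcomm2.
pose psi' b := epsilon (inhabits (zro (0 : B)))
   (fun x => in_ps D x /\ Phi'2 x = Psi (Phi'1 b)).
have HS : forall b, in_ps D b -> in_ps D (psi' b) /\ Phi'2 (psi' b) = Psi (Phi'1 b).
  move=> b Hb.
  suff Ex : exists x, in_ps D x /\ Phi'2 x = Psi (Phi'1 b) by exact: (epsilon_spec _ _ Ex).
  have [x Hx1 Hx2] : exists2 x, in_ps D x & Phi'2 x = Psi (Phi'1 b).
    apply: cc2 => a.
    have [a0 _ <-] := Hpsis a (tA a).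
    by rewrite Hintertwine -HPsib // Hcomm1 // Psi0.
  by exists x.
exists psi'; split; last by move=> b Hb; case: (HS b Hb).
split.
- split.
  + by move=> b Hb; case: (HS b Hb).
  + move=> c a b Ha Hb.
    have Hab := Dc_lin c Hsigma0 Ha Hb.
    have [Ha1 Ha2] := HS a Ha; have [Hb1 Hb2] := HS b Hb; have [Hc1 Hc2] := HS _ Hab.
    apply: inj2 => //; first exact: Dc_lin.
    by rewrite Hc2 HP2l // HP1l // HPsil // Ha2 Hb2.
  + move=> a b Ha Hb.
    have Hab := Dc_mul Hsigma0 Ha Hb.
    have [Ha1 Ha2] := HS a Ha; have [Hb1 Hb2] := HS b Hb; have [Hc1 Hc2] := HS _ Hab.
    apply: inj2 => //; first exact: Dc_mul.
    by rewrite Hc2 HP2m // HP1m // HPsim // Ha2 Hb2.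
  + move=> a b Ha Hb.
    have Hab := Hpi'1D a b Ha Hb.
    have [Ha1 Ha2] := HS a Ha; have [Hb1 Hb2] := HS b Hb; have [Hc1 Hc2] := HS _ Hab.
    apply: inj2 => //; first exact: Hpi'2D.
    by rewrite Hc2 HP2b // HP1b // HPsib // Ha2 Hb2.
- move=> a b Ha Hb Hab.
  have [Ha1 Ha2] := HS a Ha; have [Hb1 Hb2] := HS b Hb.
  apply: inj1 => //; apply: HPsii => //.
  by rewrite -Ha2 -Hb2 Hab.
- move=> b Hb.
  have [x _ Hx] := HPsis (Phi'2 b) (tB _).
  have Hcx : forall a, sig1 (Phi1 a) x = zro 0.
    move=> a; apply: HPsii => //.
    by rewrite HPsib // -Hintertwine Hx Hcomm2 // Psi0.
  have [a Ha Hax] := cc1 x Hcx.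
  exists a => //.
  have [Ha1 Ha2] := HS a Ha.
  by apply: inj2 => //; rewrite Ha2 Hax Hx.
Qed.
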